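(* Let $m_X,m_Y,\Omega_X,\Omega_Y,\alpha>0$, and for each $\bar\gamma>0$ let $f_\gamma$, $F_\gamma$ denote the pdf and cdf of the instantaneous SNR of the $\alpha$-Beaulieu–Xie shadowed channel with average SNR $\bar\gamma$. Then for every fixed $\gamma>0$, as $\bar\gamma\to\infty$, $$f_\gamma(\gamma)\sim\frac{\alpha(1-\bar\beta)^{m_Y}}{2\,\mathrm{C}_\alpha^{m_X}\Gamma(m_X)\,\bar\gamma}\left(\frac{\gamma}{\bar\gamma}\right)^{\frac{\alpha m_X}{2}-1}\exp\!\Big(-\mathrm{C}_\alpha^{-1}\big(\tfrac{\gamma}{\bar\gamma}\big)^{\alpha/2}\Big),\qquad F_\gamma(\gamma)\sim\frac{(1-\bar\beta)^{m_Y}}{\mathrm{C}_\alpha^{m_X}\Gamma(m_X+1)}\left(\frac{\gamma}{\bar\gamma}\right)^{\frac{\alpha m_X}{2}},$$ where $a\sim b$ means $a/b\to1$.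
   Context: Fix parameters $m_X,m_Y,\Omega_X,\Omega_Y>0$. The Beaulieu–Xie shadowed envelope is a random variable $\bar R>0$ with density $$f_{\bar R}(r)=\frac{2r^{2m_X-1}}{\Gamma(m_X)}\left(\frac{m_Y\Omega_X}{m_Y\Omega_X+m_X\Omega_Y}\right)^{m_Y}\left(\frac{m_X}{\Omega_X}\right)^{m_X}{}_1F_1\!\left(m_Y;m_X;\frac{m_X^2\Omega_Y r^2}{\Omega_X(m_Y\Omega_X+m_X\Omega_Y)}\right)e^{-\frac{m_X}{\Omega_X}r^2},\quad r>0.$$ Set $\bar\beta=\frac{m_X\Omega_Y}{m_Y\Omega_X+m_X\Omega_Y}$. For $\alpha>0$ put $$\mathrm{C}_\alpha=\left[\frac{\Gamma(m_X)}{\Gamma(m_X+\frac{2}{\alpha})\,{}_2F_1\!\left(m_Y,-\frac{2}{\alpha};m_X;-\frac{m_X\Omega_Y}{m_Y\Omega_X}\right)}\right]^{\alpha/2}.$$ For $\bar\gamma>0$, the instantaneous SNR of the $\alpha$-Beaulieu–Xie shadowed channel with average SNR $\bar\gamma$ is the random variable $\gamma=\bar\gamma\,\big(\mathrm{C}_\alpha m_X\bar R^2/\Omega_X\big)^{2/\alpha}$. Here ${}_1F_1(a;b;z)=\sum_{n\ge0}\frac{(a)_n}{(b)_n}\frac{z^n}{n!}$, ${}_2F_1$ is the Gauss hypergeometric function. *)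

(* Defs.v *)
From Stdlib Require Import Reals Factorial.
From Coquelicot Require Import Coquelicot.
Open Scope R_scope.

Definition Gamma (s : R) : R :=
  RInt_gen (fun t => Rpower t (s - 1) * exp (- t)) (at_right 0) (Rbar_locally p_infty).

Fixpoint poch (a : R) (n : nat) : R :=
  match n with
  | O => 1
  | S k => poch a k * (a + INR k)
  end.

Definition hyp1F1 (a b z : R) : R :=
  Series (fun n => poch a n / poch b n * z ^ n / INR (Factorial.fact n)).

Definition hyp2F1_series (a b c z : R) : R :=
  Series (fun n => poch a n * poch b n / poch c n * z ^ n / INR (Factorial.fact n)).

(* Gauss hypergeometric function 2F1 on z < 1: the power series for |z| < 1, and its
   (principal-branch) analytic continuation for z <= -1, given by the Pfaff
   transformation 2F1(a,b;c;z) = (1-z)^(-a) 2F1(a,c-b;c;z/(z-1)),  z/(z-1) in [1/2,1). *)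
Definition hyp2F1 (a b c z : R) : R :=
  if Rlt_dec (Rabs z) 1 then hyp2F1_series a b c z
  else Rpower (1 - z) (- a) * hyp2F1_series a (c - b) c (z / (z - 1)).

(* Density of the Beaulieu-Xie shadowed envelope \bar R (on r > 0). *)
Definition fR (mX mY OX OY r : R) : R :=
  2 * Rpower r (2 * mX - 1) / Gamma mX
  * Rpower (mY * OX / (mY * OX + mX * OY)) mY
  * Rpower (mX / OX) mX
  * hyp1F1 mY mX (mX ^ 2 * OY * r ^ 2 / (OX * (mY * OX + mX * OY)))
  * exp (- (mX / OX) * r ^ 2).

Definition betabar (mX mY OX OY : R) : R := mX * OY / (mY * OX + mX * OY).

Definition Calpha (mX mY OX OY alpha : R) : R :=
  Rpower (Gamma mX / (Gamma (mX + 2 / alpha)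
            * hyp2F1 mY (- (2 / alpha)) mX (- (mX * OY / (mY * OX)))))
         (alpha / 2).

(* Instantaneous SNR as a function of the envelope value r > 0. *)
Definition snr_of (mX mY OX OY alpha gbar r : R) : R :=
  gbar * Rpower (Calpha mX mY OX OY alpha * mX * r ^ 2 / OX) (2 / alpha).

Definition snr_cdf (mX mY OX OY alpha gbar x : R) : R :=
  RInt_gen (fun r => if Rle_dec (snr_of mX mY OX OY alpha gbar r) x
                     then fR mX mY OX OY r else 0)
           (at_right 0) (Rbar_locally p_infty).

Definition snr_pdf (mX mY OX OY alpha gbar x : R) : R :=
  Derive (snr_cdf mX mY OX OY alpha gbar) x.

Definition asymp_equiv (a b : R -> R) : Prop :=
  is_lim (fun t => a t / b t) p_infty 1.

(* Main.v *)
Require Import Defs.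
From Stdlib Require Import Reals Lra Lia.
From Coquelicot Require Import Coquelicot.
Open Scope R_scope.

Lemma RInt_abs_dom (f g : R -> R) (a c : R) :
  (forall x, Rmin a c <= x <= Rmax a c -> continuous f x /\ continuous g x /\ Rabs (f x) <= g x) ->
  Rabs (RInt f a c) <= Rabs (RInt g a c).
Proof.
  intros H.
  assert (Hf : ex_RInt f a c) by (apply (ex_RInt_continuous (V := R_CompleteNormedModule)); intros z Hz; apply H, Hz).
  assert (Hg : ex_RInt g a c) by (apply (ex_RInt_continuous (V := R_CompleteNormedModule)); intros z Hz; apply H, Hz).
  assert (K : forall a c, a <= c -> ex_RInt f a c -> ex_RInt g a c ->
     (forall x, a <= x <= c -> continuous f x /\ continuous g x /\ Rabs (f x) <= g x) ->
     Rabs (RInt f a c) <= Rabs (RInt g a c)).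
  { clear. intros a c Hac Hf Hg H.
    eapply Rle_trans. apply abs_RInt_le; auto.
    assert (ex_RInt (fun t => Rabs (f t)) a c).
    { apply (ex_RInt_continuous (V := R_CompleteNormedModule)). intros z Hz. rewrite Rmin_left in Hz by lra. rewrite Rmax_right in Hz by lra.
      apply continuous_comp. apply H; lra. apply continuous_Rabs. }
    eapply Rle_trans. apply (RInt_le _ g); [lra|assumption|assumption|]. intros x Hx. destruct (H x) as [_ [_ Hh]]; [lra|exact Hh].
    apply Rle_abs. }
  destruct (Rle_or_lt a c) as [Hac|Hac].
  - apply K; auto. intros x Hx. apply H. rewrite Rmin_left, Rmax_right; lra.
  - rewrite <- (opp_RInt_swap f c a), <- (opp_RInt_swap g c a) by (apply ex_RInt_swap; auto).
    unfold opp; simpl. rewrite !Rabs_Ropp.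
    apply K; [lra| | |].
    apply ex_RInt_swap; auto. apply ex_RInt_swap; auto.
    intros x Hx. apply H. rewrite Rmin_right, Rmax_left; lra.
Qed.

Lemma ex_RInt_gen_dom (Fa Fb : (R -> Prop) -> Prop) (HFa : ProperFilter Fa) (HFb : ProperFilter Fb)
  (f g : R -> R) (Q Rr : R -> Prop) :
  Fa Q -> Fb Rr ->
  (forall a b, Q a -> Rr b -> a < b /\ forall x, a <= x <= b ->
      continuous f x /\ continuous g x /\ Rabs (f x) <= g x) ->
  ex_RInt_gen g Fa Fb -> ex_RInt_gen f Fa Fb.
Proof.
  intros HQ HR H [lg Hg].
  assert (Huniq : forall h : R -> R, (forall a b, Q a -> Rr b -> forall x, a <= x <= b -> continuous h x) ->
    filter_prod Fa Fb (fun x => (exists y : R, is_RInt h (fst x) (snd x) y) /\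
        (forall y1 y2, is_RInt h (fst x) (snd x) y1 -> is_RInt h (fst x) (snd x) y2 -> y1 = y2))).
  { intros h Hh. apply (Filter_prod _ _ _ Q Rr HQ HR). intros a b Ha Hb; simpl. split.
    - exists (RInt h a b). apply (RInt_correct (V := R_CompleteNormedModule)), ex_RInt_continuous. intros z Hz.
      destruct (H a b Ha Hb) as [Hab _]. apply (Hh a b Ha Hb).
      rewrite Rmin_left, Rmax_right in Hz; lra.
    - intros y1 y2 H1 H2. rewrite <- (is_RInt_unique _ _ _ _ H1). apply is_RInt_unique; auto. }
  unfold ex_RInt_gen, is_RInt_gen.
  refine (proj1 (filterlimi_locally_cauchy (U:=R_CompleteSpace) (F := filter_prod Fa Fb) (fun ab y => is_RInt f (fst ab) (snd ab) y) _) _).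
  - apply Huniq. intros a b Ha Hb x Hx. apply (H a b Ha Hb); auto.
  - intros eps.
    assert (Hgc := proj2 (filterlimi_locally_cauchy (U:=R_CompleteSpace) (F := filter_prod Fa Fb) (fun ab y => is_RInt g (fst ab) (snd ab) y)
                  
                   (Huniq g (fun a b Ha Hb x Hx => proj1 (proj2 (proj2 (H a b Ha Hb) x Hx))))) (ex_intro _ lg Hg)).
    assert (He2 : 0 < eps / 2) by (destruct eps; simpl; lra).
    destruct (Hgc (mkposreal _ He2)) as [P [HP HPc]].
    destruct HP as [Q' R' HQ' HR' Hsub].
    exists (fun u => Q (fst u) /\ Q' (fst u) /\ Rr (snd u) /\ R' (snd u)). split.
    + apply (Filter_prod _ _ _ (fun a => Q a /\ Q' a) (fun b => Rr b /\ R' b)).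
      apply filter_and; auto. apply filter_and; auto.
      intros x y [] []; simpl; auto.
    + intros [a1 b1] [a2 b2] [Ha1 [Ha1' [Hb1 Hb1']]] [Ha2 [Ha2' [Hb2 Hb2']]] u v Hu Hv; simpl in *.
      assert (Dom : forall a b x, Q a -> Rr b -> a <= x <= b -> continuous f x /\ continuous g x /\ Rabs (f x) <= g x)
        by (intros a b x Ha Hb Hx; apply (H a b Ha Hb); auto).
      assert (Hab := fun a b Ha Hb => proj1 (H a b Ha Hb)).
      assert (Cf : forall a b, Q a -> Rr b -> forall x, a <= x <= b -> continuous f x) by (intros; apply Dom with a b; auto).
      assert (Cg : forall a b, Q a -> Rr b -> forall x, a <= x <= b -> continuous g x) by (intros; apply Dom with a b; auto).
      assert (exf : forall a b, Q a -> Rr b -> ex_RInt f a b).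
      { intros a b Ha Hb. apply (ex_RInt_continuous (V := R_CompleteNormedModule)). intros z Hz. apply (Cf a b Ha Hb).
        specialize (Hab a b Ha Hb). rewrite Rmin_left, Rmax_right in Hz; lra. }
      assert (exg : forall a b, Q a -> Rr b -> ex_RInt g a b).
      { intros a b Ha Hb. apply (ex_RInt_continuous (V := R_CompleteNormedModule)). intros z Hz. apply (Cg a b Ha Hb).
        specialize (Hab a b Ha Hb). rewrite Rmin_left, Rmax_right in Hz; lra. }
      rewrite <- (is_RInt_unique _ _ _ _ Hu), <- (is_RInt_unique _ _ _ _ Hv).
      assert (DA : forall x, Rmin a1 a2 <= x <= Rmax a1 a2 -> continuous f x /\ continuous g x /\ Rabs (f x) <= g x).
      { intros x Hx. assert (Qm : Q (Rmin a1 a2)) by (unfold Rmin; destruct Rle_dec; auto).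
        apply (Dom (Rmin a1 a2) b1); auto. split. lra.
        assert (Rmax a1 a2 < b1) by (unfold Rmax; destruct Rle_dec; [apply Hab|apply Hab]; auto). lra. }
      assert (DB : forall x, Rmin b1 b2 <= x <= Rmax b1 b2 -> continuous f x /\ continuous g x /\ Rabs (f x) <= g x).
      { intros x Hx. assert (Rm : Rr (Rmax b1 b2)) by (unfold Rmax; destruct Rle_dec; auto).
        apply (Dom a1 (Rmax b1 b2)); auto. split.
        assert (a1 < Rmin b1 b2) by (unfold Rmin; destruct Rle_dec; [apply Hab|apply Hab]; auto). lra. lra. }
      assert (EA : forall h, (forall x, Rmin a1 a2 <= x <= Rmax a1 a2 -> continuous h x) -> ex_RInt h a1 a2)
        by (intros; apply (ex_RInt_continuous (V := R_CompleteNormedModule)); auto).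
      assert (EB : forall h, (forall x, Rmin b1 b2 <= x <= Rmax b1 b2 -> continuous h x) -> ex_RInt h b2 b1)
        by (intros; apply (ex_RInt_continuous (V := R_CompleteNormedModule)); intros; apply H0; rewrite Rmin_comm, Rmax_comm; auto).
      assert (Chf : RInt f a1 b1 = RInt f a1 a2 + RInt f a2 b2 + RInt f b2 b1).
      { rewrite <- (RInt_Chasles f a1 b2 b1), <- (RInt_Chasles f a1 a2 b2).
        unfold plus; simpl; ring.
        all: try first [solve [apply exf; auto] | apply EA; intros x Hx; exact (proj1 (DA x Hx)) | apply EB; intros x Hx; exact (proj1 (DB x Hx))
           | apply (ex_RInt_Chasles f a1 a2 b2); [apply EA; intros x Hx; exact (proj1 (DA x Hx))| apply exf; auto]]. }
      assert (Cga : RInt g a1 b1 - RInt g a2 b1 = RInt g a1 a2).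
      { rewrite <- (RInt_Chasles g a1 a2 b1). unfold plus; simpl; ring.
        apply EA; intros x Hx; exact (proj1 (proj2 (DA x Hx))). apply exg; auto. }
      assert (Cgb : RInt g a1 b1 - RInt g a1 b2 = RInt g b2 b1).
      { rewrite <- (RInt_Chasles g a1 b2 b1). unfold plus; simpl; ring.
        apply exg; auto. apply EB; intros x Hx; exact (proj1 (proj2 (DB x Hx))). }
      assert (B1 : Rabs (RInt g a1 b1 - RInt g a2 b1) < eps / 2).
      { assert (Hx := HPc (a1,b1) (a2,b1) (Hsub _ _ Ha1' Hb1') (Hsub _ _ Ha2' Hb1') _ _
           (RInt_correct (V := R_CompleteNormedModule) _ _ _ (exg a1 b1 Ha1 Hb1)) (RInt_correct (V := R_CompleteNormedModule) _ _ _ (exg a2 b1 Ha2 Hb1))).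
        simpl in Hx. unfold ball in Hx; simpl in Hx. unfold AbsRing_ball, abs, minus, plus, opp in Hx; simpl in Hx.
        rewrite <- Rabs_Ropp. replace (- (RInt g a1 b1 - RInt g a2 b1)) with (RInt g a2 b1 + - RInt g a1 b1) by ring. exact Hx. }
      assert (B2 : Rabs (RInt g a1 b1 - RInt g a1 b2) < eps / 2).
      { assert (Hx := HPc (a1,b1) (a1,b2) (Hsub _ _ Ha1' Hb1') (Hsub _ _ Ha1' Hb2') _ _
           (RInt_correct (V := R_CompleteNormedModule) _ _ _ (exg a1 b1 Ha1 Hb1)) (RInt_correct (V := R_CompleteNormedModule) _ _ _ (exg a1 b2 Ha1 Hb2))).
        simpl in Hx. unfold ball in Hx; simpl in Hx. unfold AbsRing_ball, abs, minus, plus, opp in Hx; simpl in Hx.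
        rewrite <- Rabs_Ropp. replace (- (RInt g a1 b1 - RInt g a1 b2)) with (RInt g a1 b2 + - RInt g a1 b1) by ring. exact Hx. }
      assert (A1 := RInt_abs_dom f g a1 a2 DA).
      assert (A2 := RInt_abs_dom f g b2 b1 (fun x Hx => DB x (conj (Rle_trans _ _ _ (Req_le _ _ (Rmin_comm _ _)) (proj1 Hx)) (Rle_trans _ _ _ (proj2 Hx) (Req_le _ _ (Rmax_comm _ _)))))).
      unfold ball; simpl. unfold AbsRing_ball, abs, minus, plus, opp; simpl.
      rewrite Chf. rewrite Cga in B1. rewrite Cgb in B2.
      replace (RInt f a2 b2 + - (RInt f a1 a2 + RInt f a2 b2 + RInt f b2 b1)) with (- (RInt f a1 a2 + RInt f b2 b1)) by ring.
      rewrite Rabs_Ropp. eapply Rle_lt_trans. apply Rabs_triang. destruct eps; simpl in *; lra.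
Qed.

Lemma Rpower_pos x y : 0 < Rpower x y.
Proof. unfold Rpower; apply exp_pos. Qed.

Lemma is_derive_Rpower x y : 0 < x -> is_derive (fun t => Rpower t y) x (y * Rpower x (y-1)).
Proof. intros Hx. apply is_derive_Reals. apply derivable_pt_lim_power; auto. Qed.

Lemma continuous_Rpower x y : 0 < x -> continuous (fun t => Rpower t y) x.
Proof. intros Hx. apply (ex_derive_continuous (K:=R_AbsRing) (V:=R_NormedModule)). eexists. apply is_derive_Rpower; auto. Qed.

Lemma lim_Rpower_0 s : 0 < s -> filterlim (fun r => Rpower r s) (at_right 0) (locally 0).
Proof.
  intros Hs P [eps HP].
  assert (Hd : 0 < Rpower eps (1/s)) by apply Rpower_pos.
  exists (mkposreal _ Hd). intros y Hy Hy0. apply HP.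
  unfold ball in *; simpl in *. unfold AbsRing_ball, abs, minus, plus, opp in *; simpl in *.
  rewrite Ropp_0, Rplus_0_r in *. rewrite Rabs_pos_eq in * by (try apply Rlt_le, Rpower_pos; lra).
  replace (pos eps) with (Rpower (Rpower eps (1/s)) s).
  apply Rlt_Rpower_l; lra.
  rewrite Rpower_mult. replace (1/s*s) with 1 by (field; lra). apply Rpower_1. destruct eps; auto.
Qed.

Lemma fp_right0_point (b : R) (P : R * R -> Prop) : 0 < b ->
  (forall a, 0 < a < b -> P (a, b)) -> filter_prod (at_right 0) (at_point b) P.
Proof.
  intros Hb H. apply (Filter_prod _ _ _ (fun a => 0 < a < b) (fun y => y = b)).
  - exists (mkposreal _ Hb). intros y Hy Hy0. unfold ball in Hy; simpl in Hy.
    unfold AbsRing_ball, abs, minus, plus, opp in Hy; simpl in Hy.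
    rewrite Ropp_0, Rplus_0_r, Rabs_pos_eq in Hy; lra.
  - reflexivity.
  - intros x y Hx ->. apply H; auto.
Qed.

Lemma fp_point_pinf (c : R) (P : R * R -> Prop) :
  (forall y, c < y -> P (c, y)) -> filter_prod (at_point c) (Rbar_locally p_infty) P.
Proof.
  intros H. apply (Filter_prod _ _ _ (fun a => a = c) (fun y => c < y)).
  - reflexivity.
  - exists c. auto.
  - intros x y -> Hy. apply H; auto.
Qed.

Lemma fp_right0_pinf (P : R * R -> Prop) :
  (forall a y, 0 < a < 1 -> 1 < y -> P (a, y)) -> filter_prod (at_right 0) (Rbar_locally p_infty) P.
Proof.
  intros H. apply (Filter_prod _ _ _ (fun a => 0 < a < 1) (fun y => 1 < y)).
  - assert (H1 : 0 < 1) by lra. exists (mkposreal _ H1). intros y Hy Hy0. unfold ball in Hy; simpl in Hy.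
    unfold AbsRing_ball, abs, minus, plus, opp in Hy; simpl in Hy.
    rewrite Ropp_0, Rplus_0_r, Rabs_pos_eq in Hy; lra.
  - exists 1. auto.
  - intros x y Hx Hy. apply H; auto.
Qed.

Lemma is_RInt_gen_power (s b : R) : 0 < s -> 0 < b ->
  is_RInt_gen (fun r => Rpower r (s - 1)) (at_right 0) (at_point b) (Rpower b s / s).
Proof.
  intros Hs Hb.
  assert (HD : forall x, 0 < x -> Derive (fun r => Rpower r s / s) x = Rpower x (s - 1)).
  { intros x Hx. apply is_derive_unique.
    replace (Rpower x (s-1)) with (/s * (s * Rpower x (s-1))) by (field; lra).
    apply (is_derive_ext (fun r => /s * Rpower r s)); [intros t; unfold Rdiv; apply Rmult_comm|].
    apply is_derive_scal. apply is_derive_Rpower; auto. }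
  apply is_RInt_gen_ext with (Derive (fun r => Rpower r s / s)).
  - apply fp_right0_point; auto. intros a Ha x Hx. simpl in Hx.
    rewrite Rmin_left, Rmax_right in Hx by lra. apply HD; lra.
  - replace (Rpower b s / s) with (Rpower b s / s - 0) by ring.
    apply is_RInt_gen_Derive.
    + apply fp_right0_point; auto. intros a Ha x Hx. simpl in Hx.
      rewrite Rmin_left, Rmax_right in Hx by lra.
      eexists. apply (is_derive_ext (fun r => /s * Rpower r s)); [intros t; unfold Rdiv; apply Rmult_comm|].
      apply is_derive_scal. apply is_derive_Rpower; lra.
    + apply fp_right0_point; auto. intros a Ha x Hx. simpl in Hx.
      rewrite Rmin_left, Rmax_right in Hx by lra.
      apply continuous_ext_loc with (fun r => Rpower r (s - 1)).
      * assert (Hx0 : 0 < x) by lra. exists (mkposreal _ Hx0). intros y Hy.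
        unfold ball in Hy; simpl in Hy. unfold AbsRing_ball, abs, minus, plus, opp in Hy; simpl in Hy.
        symmetry; apply HD. apply Rabs_def2 in Hy. lra.
      * apply continuous_Rpower; lra.
    + apply (filterlim_comp _ _ _ (fun r => Rpower r s) (fun y => y / s) _ (locally 0)).
      apply lim_Rpower_0; auto.
      assert (Hc : continuous (fun y => y / s) 0).
      { apply (continuous_ext (fun y => /s * y)). intros; unfold Rdiv; apply Rmult_comm.
        apply (continuous_mult (fun _ => /s) (fun y => y)). apply continuous_const. apply continuous_id. }
      unfold continuous in Hc. replace (0 / s) with 0 in Hc by (field; lra). exact Hc.
    + intros P HP. unfold filtermap, at_point. apply locally_singleton. exact HP.
Qed.

Lemma exp_mono x y : x <= y -> exp x <= exp y.
Proof. intros [H|H]; [apply Rlt_le, exp_increasing; auto | subst; lra]. Qed.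

Lemma ln_le_minus1 x : 0 < x -> ln x <= x - 1.
Proof. intros Hx. generalize (exp_ineq1_le (ln x)). rewrite exp_ln; lra. Qed.

Lemma ln_ge0 x : 1 <= x -> 0 <= ln x.
Proof. intros H. rewrite <- ln_1. destruct H as [H|H]. apply Rlt_le, ln_increasing; lra. subst; lra. Qed.

Lemma power_exp_bound (a : R) : exists K, 0 < K /\
  forall t, 1 <= t -> Rpower t a * exp (- t) <= K * exp (- t / 2).
Proof.
  set (c := 2 * (Rabs a + 1)).
  assert (Hc : 0 < c) by (unfold c; generalize (Rabs_pos a); lra).
  exists (exp (Rabs a * Rabs (ln c - 1))). split. apply exp_pos.
  intros t Ht. unfold Rpower. rewrite <- exp_plus, <- exp_plus. apply exp_mono.
  assert (H1 : ln t <= t / c - 1 + ln c).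
  { assert (Ht0 : 0 < t) by lra. replace (ln t) with (ln (t / c) + ln c).
    generalize (ln_le_minus1 (t / c) (Rdiv_lt_0_compat _ _ Ht0 Hc)). lra.
    rewrite ln_div by lra. ring. }
  assert (H2 : a * ln t <= Rabs a * ln t).
  { apply Rmult_le_compat_r. apply ln_ge0; auto. apply Rle_abs. }
  assert (H3 : Rabs a * ln t <= Rabs a * (t / c) + Rabs a * Rabs (ln c - 1)).
  { rewrite <- Rmult_plus_distr_l. apply Rmult_le_compat_l. apply Rabs_pos.
    generalize (Rle_abs (ln c - 1)). lra. }
  assert (H4 : Rabs a * (t / c) <= t / 2).
  { assert (Ha0 := Rabs_pos a).
    replace (Rabs a * (t/c)) with (t/2 * (Rabs a/(Rabs a+1))) by (unfold c; field; lra).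
    apply Rle_trans with (t/2 * 1); [apply Rmult_le_compat_l; [lra| ] | lra].
    apply (Rmult_le_reg_r (Rabs a + 1)); [lra|]. unfold Rdiv; rewrite Rmult_assoc, Rinv_l by lra; lra. }
  lra.
Qed.

Lemma ex_gen_right0 (f : R -> R) (s b M : R) : 0 < s -> 0 < b ->
  (forall x, 0 < x <= b -> continuous f x /\ Rabs (f x) <= M * Rpower x (s - 1)) ->
  ex_RInt_gen f (at_right 0) (at_point b).
Proof.
  intros Hs Hb H.
  apply (ex_RInt_gen_dom _ _ (at_right_proper_filter 0) (at_point_filter b) f (fun x => M * Rpower x (s - 1))
     (fun a => 0 < a < b) (fun y => y = b)).
  - exists (mkposreal _ Hb). intros y Hy Hy0. unfold ball in Hy; simpl in Hy.
    unfold AbsRing_ball, abs, minus, plus, opp in Hy; simpl in Hy.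
    rewrite Ropp_0, Rplus_0_r, Rabs_pos_eq in Hy; lra.
  - reflexivity.
  - intros a y Ha ->. split. lra. intros x Hx. destruct (H x) as [H1 H2]. lra.
    repeat split; auto.
    apply (continuous_mult (fun _ => M) (fun x => Rpower x (s - 1))). apply continuous_const.
    apply continuous_Rpower; lra.
  - exists (scal M (Rpower b s / s)). apply (is_RInt_gen_scal (fun x => Rpower x (s - 1))).
    apply is_RInt_gen_power; auto.
Qed.

Lemma is_RInt_gen_exp_tail (c M k : R) : 0 < k ->
  is_RInt_gen (fun x => M * exp (- k * x)) (at_point c) (Rbar_locally p_infty) (M / k * exp (- k * c)).
Proof.
  intros Hk.
  set (F := fun x => - (M / k) * exp (- k * x)).
  assert (HD : forall x, is_derive F x (M * exp (- k * x))).
  { intros x. unfold F. auto_derive. auto. field. lra. }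
  apply is_RInt_gen_ext with (Derive F).
  - apply fp_point_pinf. intros y _ x _. apply is_derive_unique, HD.
  - replace (M / k * exp (- k * c)) with (0 - F c) by (unfold F; ring).
    apply is_RInt_gen_Derive.
    + apply fp_point_pinf. intros y _ x _. eexists. apply HD.
    + apply fp_point_pinf. intros y _ x _.
      apply (continuous_ext (fun x => M * exp (- k * x))). intros t. symmetry. apply is_derive_unique, HD.
      apply (continuous_mult (fun _ => M) (fun x => exp (- k * x))). apply continuous_const.
      apply continuous_exp_comp. apply (continuous_mult (fun _ => - k) (fun x => x)). apply continuous_const. apply continuous_id.
    + intros P HP. unfold filtermap, at_point. apply locally_singleton. exact HP.
    + unfold F. intros P [eps HP].
      assert (Hm : 0 < eps * k / (Rabs M + 1)).
      { apply Rdiv_lt_0_compat. apply Rmult_lt_0_compat; [destruct eps; auto|auto]. generalize (Rabs_pos M); lra. }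
      exists (- ln (eps * k / (Rabs M + 1)) / k). intros x Hx. apply HP.
      unfold ball; simpl. unfold AbsRing_ball, abs, minus, plus, opp; simpl. rewrite Ropp_0, Rplus_0_r.
      rewrite Rabs_mult, Rabs_Ropp, (Rabs_pos_eq (exp (- k * x))) by (apply Rlt_le, exp_pos).
      assert (Hx' : - k * x < ln (eps * k / (Rabs M + 1))).
      { apply Rmult_lt_compat_l with (r := k) in Hx; auto. unfold Rdiv in Hx. field_simplify in Hx; lra. }
      apply exp_increasing in Hx'. rewrite exp_ln in Hx' by auto.
      unfold Rdiv. rewrite Rabs_mult, (Rabs_pos_eq (/ k)) by (apply Rlt_le, Rinv_0_lt_compat; auto).
      apply Rle_lt_trans with ((Rabs M + 1) * / k * exp (- k * x)).
      apply Rmult_le_compat_r. apply Rlt_le, exp_pos.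
      apply Rmult_le_compat_r. apply Rlt_le, Rinv_0_lt_compat; auto. lra.
      apply Rlt_le_trans with ((Rabs M + 1) * / k * (eps * k / (Rabs M + 1))).
      apply Rmult_lt_compat_l. apply Rmult_lt_0_compat. generalize (Rabs_pos M); lra. apply Rinv_0_lt_compat; auto. auto.
      right. field. generalize (Rabs_pos M); lra.
Qed.

Lemma ex_gen_pinf (f : R -> R) (c M k : R) : 0 < k ->
  (forall x, c <= x -> continuous f x /\ Rabs (f x) <= M * exp (- k * x)) ->
  ex_RInt_gen f (at_point c) (Rbar_locally p_infty).
Proof.
  intros Hk H.
  apply (ex_RInt_gen_dom _ _ (at_point_filter c) (Rbar_locally_filter p_infty) f (fun x => M * exp (- k * x))
     (fun a => a = c) (fun y => c < y)).
  - reflexivity.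
  - exists c; auto.
  - intros a y -> Hy. split. lra. intros x Hx. destruct (H x) as [H1 H2]. lra.
    repeat split; auto.
    apply (continuous_mult (fun _ => M) (fun x => exp (- k * x))). apply continuous_const.
    apply continuous_exp_comp. apply (continuous_mult (fun _ => - k) (fun x => x)). apply continuous_const. apply continuous_id.
  - eexists. apply is_RInt_gen_exp_tail; auto.
Qed.

Lemma lim_exp_bound (h : R -> R) (K : R) : 0 < K ->
  (forall t, 1 <= t -> Rabs (h t) <= K * exp (- t / 2)) ->
  filterlim h (Rbar_locally p_infty) (locally 0).
Proof.
  intros HK H P [eps HP].
  assert (He : 0 < eps / K) by (apply Rdiv_lt_0_compat; [destruct eps|]; auto).
  exists (Rmax 1 (- 2 * ln (eps / K))). intros x Hx. apply HP.
  unfold ball; simpl. unfold AbsRing_ball, abs, minus, plus, opp; simpl. rewrite Ropp_0, Rplus_0_r.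
  assert (H1 : 1 <= x) by (generalize (Rmax_l 1 (- 2 * ln (eps / K))); lra).
  assert (H2 : - x / 2 < ln (eps / K)) by (generalize (Rmax_r 1 (- 2 * ln (eps / K))); lra).
  apply exp_increasing in H2. rewrite exp_ln in H2 by auto.
  eapply Rle_lt_trans. apply H; auto.
  apply Rlt_le_trans with (K * (eps / K)). apply Rmult_lt_compat_l; auto.
  right. field. lra.
Qed.

Definition gint (s : R) := fun t => Rpower t (s - 1) * exp (- t).

Lemma gint_cont s x : 0 < x -> continuous (gint s) x.
Proof.
  intros Hx. unfold gint.
  apply (continuous_mult (fun t => Rpower t (s - 1)) (fun t => exp (- t))).
  apply continuous_Rpower; auto.
  apply continuous_exp_comp. apply (continuous_opp (K := R_AbsRing) (V := R_NormedModule) (fun t => t)). apply continuous_id.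
Qed.

Lemma gint_pos s x : 0 < gint s x.
Proof. unfold gint. apply Rmult_lt_0_compat. apply Rpower_pos. apply exp_pos. Qed.

Lemma gamma_left s b : 0 < s -> 0 < b -> ex_RInt_gen (gint s) (at_right 0) (at_point b).
Proof.
  intros Hs Hb. apply (ex_gen_right0 _ s b 1); auto.
  intros x Hx. split. apply gint_cont; lra.
  rewrite Rabs_pos_eq by (apply Rlt_le, gint_pos). unfold gint. rewrite Rmult_1_l, Rmult_comm.
  rewrite <- (Rmult_1_l (Rpower x (s-1))) at 2. apply Rmult_le_compat_r. apply Rlt_le, Rpower_pos.
  rewrite <- exp_0. apply exp_mono. lra.
Qed.

Lemma gamma_right s : ex_RInt_gen (gint s) (at_point 1) (Rbar_locally p_infty).
Proof.
  destruct (power_exp_bound (s - 1)) as [K [HK HB]].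
  apply (ex_gen_pinf _ 1 K (1/2)). lra.
  intros x Hx. split. apply gint_cont; lra.
  rewrite Rabs_pos_eq by (apply Rlt_le, gint_pos). unfold gint.
  replace (- (1/2) * x) with (- x / 2) by field. apply HB; auto.
Qed.

Lemma nonneg_gen (f : R -> R) (Fa Fb : (R -> Prop) -> Prop) (HFa : ProperFilter Fa) (HFb : ProperFilter Fb) l :
  filter_prod Fa Fb (fun ab => fst ab <= snd ab) ->
  (forall x, 0 <= f x) -> is_RInt_gen f Fa Fb l -> 0 <= l.
Proof.
  intros Hle Hf H.
  assert (Hn := RInt_gen_norm (V := R_CompleteNormedModule) f f l l Hle).
  assert (norm l <= l).
  { apply Hn; auto. apply filter_forall. intros ab x _. unfold norm; simpl. unfold abs; simpl.
    rewrite Rabs_pos_eq; auto. lra. }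
  unfold norm in H0; simpl in H0. unfold abs in H0; simpl in H0.
  generalize (Rabs_pos l). lra.
Qed.

Lemma Gamma_is s : 0 < s -> is_RInt_gen (gint s) (at_right 0) (Rbar_locally p_infty) (Gamma s) /\ 0 < Gamma s.
Proof.
  intros Hs.
  destruct (gamma_left s (1/2) Hs) as [A HA]. lra.
  destruct (gamma_right s) as [C HC].
  pose (B := (RInt (gint s) (1/2) 1 : R)).
  assert (HB : is_RInt (gint s) (1/2) 1 B).
  { apply (RInt_correct (V := R_CompleteNormedModule)). apply (ex_RInt_continuous (V := R_CompleteNormedModule)).
    intros z Hz. apply gint_cont. rewrite Rmin_left in Hz; lra. }
  assert (Hall : is_RInt_gen (gint s) (at_right 0) (Rbar_locally p_infty) (plus A (plus B C))).
  { apply (is_RInt_gen_Chasles (V := R_NormedModule)) with (1/2); auto.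
    apply (is_RInt_gen_Chasles (V := R_NormedModule)) with 1; auto. apply is_RInt_gen_at_point; auto. }
  assert (HG : Gamma s = plus A (plus B C)).
  { unfold Gamma. apply (is_RInt_gen_unique (V := R_CompleteNormedModule)). exact Hall. }
  split. rewrite HG; exact Hall.
  rewrite HG. unfold plus; simpl.
  assert (0 <= A).
  { apply (nonneg_gen (gint s) _ _ (at_right_proper_filter 0) (at_point_filter (1/2))); auto.
    apply fp_right0_point. lra. intros; simpl; lra. intros; apply Rlt_le, gint_pos. }
  assert (0 <= C).
  { apply (nonneg_gen (gint s) _ _ (at_point_filter 1) (Rbar_locally_filter p_infty)); auto.
    apply fp_point_pinf. intros; simpl; lra. intros; apply Rlt_le, gint_pos. }
  assert (0 < B).
  { unfold B. apply RInt_gt_0. lra. intros; apply gint_pos. intros; apply gint_cont; lra. }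
  lra.
Qed.

Lemma lim_right0_bound (h : R -> R) (s : R) : 0 < s ->
  (forall t, 0 < t -> Rabs (h t) <= Rpower t s) -> filterlim h (at_right 0) (locally 0).
Proof.
  intros Hs H P [eps HP].
  assert (L := lim_Rpower_0 s Hs (ball 0 eps) (locally_ball 0 eps)).
  destruct L as [d Hd]. exists d. intros y Hy Hy0. apply HP.
  specialize (Hd y Hy Hy0). simpl in Hd.
  unfold ball in *; simpl in *. unfold AbsRing_ball, abs, minus, plus, opp in *; simpl in *.
  rewrite Ropp_0, Rplus_0_r in *. eapply Rle_lt_trans. apply H; auto.
  eapply Rle_lt_trans. apply Rle_abs. auto.
Qed.

Lemma Gamma_succ s : 0 < s -> Gamma (s + 1) = s * Gamma s.
Proof.
  intros Hs. destruct (Gamma_is s Hs) as [HG _].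
  set (H := fun t => - (Rpower t s * exp (- t))).
  assert (HD : forall t, 0 < t -> is_derive H t (gint (s + 1) t - s * gint s t)).
  { intros t Ht. unfold H, gint. replace (s + 1 - 1) with s by ring.
    apply (is_derive_ext (fun t => - (Rpower t s * exp (- t)))); [intros; reflexivity|].
    replace (Rpower t s * exp (- t) - s * (Rpower t (s - 1) * exp (- t)))
      with (- (s * Rpower t (s - 1) * exp (- t) + Rpower t s * (- 1 * exp (- t)))) by ring.
    apply (is_derive_opp (fun t => Rpower t s * exp (- t))).
    apply (is_derive_mult (fun t => Rpower t s) (fun t => exp (- t))).
    apply is_derive_Rpower; auto.
    apply (is_derive_comp exp (fun t => - t)). apply is_derive_exp.
    apply (is_derive_opp (K:=R_AbsRing) (V:=R_NormedModule) (fun t => t) t 1). apply (is_derive_id (K:=R_AbsRing)).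
    intros; apply Rmult_comm. }
  assert (Hint : is_RInt_gen (fun t => plus (Derive H t) (scal s (gint s t))) (at_right 0) (Rbar_locally p_infty)
                  (plus (0 - 0) (scal s (Gamma s)))).
  { apply (is_RInt_gen_plus (V:=R_NormedModule) (Derive H) (fun t => scal s (gint s t))).
    - apply (is_RInt_gen_Derive (Fa := at_right 0) (Fb := Rbar_locally p_infty) H 0 0).
      + apply fp_right0_pinf. intros a y Ha Hy x Hx. simpl in Hx. rewrite Rmin_left, Rmax_right in Hx by lra.
        eexists. apply HD. lra.
      + apply fp_right0_pinf. intros a y Ha Hy x Hx. simpl in Hx. rewrite Rmin_left, Rmax_right in Hx by lra.
        apply continuous_ext_loc with (fun t => gint (s + 1) t - s * gint s t).
        * assert (Hx0 : 0 < x) by lra. exists (mkposreal _ Hx0). intros z Hz.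
          unfold ball in Hz; simpl in Hz. unfold AbsRing_ball, abs, minus, plus, opp in Hz; simpl in Hz.
          apply Rabs_def2 in Hz. symmetry. apply is_derive_unique, HD. lra.
        * apply (continuous_minus (fun t => gint (s + 1) t) (fun t => s * gint s t)).
          apply gint_cont; lra.
          apply (continuous_mult (fun _ => s) (fun t => gint s t)). apply continuous_const. apply gint_cont; lra.
      + apply (lim_right0_bound H s Hs). intros t Ht. unfold H. rewrite Rabs_Ropp, Rabs_pos_eq.
        rewrite <- (Rmult_1_r (Rpower t s)) at 2. apply Rmult_le_compat_l. apply Rlt_le, Rpower_pos.
        rewrite <- exp_0. apply exp_mono. lra.
        apply Rmult_le_pos; apply Rlt_le; [apply Rpower_pos|apply exp_pos].
      + destruct (power_exp_bound s) as [K [HK HB]].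
        apply (lim_exp_bound H K HK). intros t Ht. unfold H. rewrite Rabs_Ropp, Rabs_pos_eq.
        apply HB; auto.
        apply Rmult_le_pos; apply Rlt_le; [apply Rpower_pos|apply exp_pos].
    - apply (is_RInt_gen_scal (gint s)). exact HG. }
  transitivity (plus (0 - 0) (scal s (Gamma s))).
  2: (unfold plus, scal; simpl; unfold mult; simpl; ring).
  unfold Gamma at 1. apply (is_RInt_gen_unique (V := R_CompleteNormedModule)).
  apply is_RInt_gen_ext with (fun t => plus (Derive H t) (scal s (gint s t))); [|exact Hint].
  apply fp_right0_pinf. intros a y Ha Hy x Hx. simpl in Hx. rewrite Rmin_left, Rmax_right in Hx by lra.
  rewrite (is_derive_unique _ _ _ (HD x ltac:(lra))). unfold plus, scal; simpl; unfold mult; simpl.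
  unfold gint. ring.
Qed.

Lemma poch_pos a n : 0 < a -> 0 < poch a n.
Proof. intros Ha. induction n; simpl. lra. apply Rmult_lt_0_compat; auto. generalize (pos_INR n); lra. Qed.

Definition hcoef (a b : R) (n : nat) : R := poch a n / poch b n / INR (Factorial.fact n).

Lemma hyp1F1_PSeries a b z : 0 < b -> hyp1F1 a b z = PSeries (hcoef a b) z.
Proof.
  intros Hb. unfold hyp1F1, PSeries. apply Series_ext. intros n. unfold hcoef.
  assert (poch b n <> 0) by (apply Rgt_not_eq, poch_pos; auto).
  assert (INR (Factorial.fact n) <> 0) by apply INR_fact_neq_0.
  field; auto.
Qed.

Lemma hcoef_radius a b : 0 < a -> 0 < b -> CV_radius (hcoef a b) = p_infty.
Proof.
  intros Ha Hb.
  assert (Hc : forall m, 0 < hcoef a b m).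
  { intros m. unfold hcoef, Rdiv. apply Rmult_lt_0_compat.
    apply Rmult_lt_0_compat. apply poch_pos; auto. apply Rinv_0_lt_compat, poch_pos; auto.
    apply Rinv_0_lt_compat. apply lt_0_INR. apply Factorial.lt_O_fact. }
  apply CV_radius_infinite_DAlembert.
  - intros n. apply Rgt_not_eq, Hc.
  - apply is_lim_seq_ext with (fun n => (a + INR n) / (b + INR n) / INR (S n)).
    + intros n. rewrite Rabs_pos_eq by (apply Rlt_le, Rdiv_lt_0_compat; apply Hc).
      unfold hcoef. simpl poch. rewrite fact_simpl, mult_INR.
      assert (0 < poch a n) by (apply poch_pos; auto).
      assert (0 < poch b n) by (apply poch_pos; auto).
      assert (0 < INR (Factorial.fact n)) by (apply lt_0_INR, Factorial.lt_O_fact).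
      assert (0 < INR (S n)) by (apply lt_0_INR; lia).
      assert (0 <= INR n) by apply pos_INR.
      field. repeat split; lra.
    + apply is_lim_seq_le_le with (fun _ => 0) (fun n => (a / b + 1) * / INR (S n)).
      * intros n. assert (0 < INR (S n)) by (apply lt_0_INR; lia).
        assert (0 <= INR n) by apply pos_INR. split.
        unfold Rdiv. repeat apply Rmult_le_pos; try apply Rlt_le; try apply Rinv_0_lt_compat; lra.
        unfold Rdiv at 2. apply Rmult_le_compat_r. apply Rlt_le, Rinv_0_lt_compat; lra.
        apply (Rmult_le_reg_r (b + INR n)). lra.
        unfold Rdiv. rewrite Rmult_assoc, Rinv_l by lra. rewrite Rmult_1_r.
        field_simplify. 2: lra.
        apply (Rmult_le_reg_r b). lra. unfold Rdiv. rewrite Rmult_assoc, Rinv_l by lra.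
        assert (0 <= a * INR n) by (apply Rmult_le_pos; lra).
        nra.
      * apply is_lim_seq_const.
      * replace (Finite 0) with (Rbar_mult (a / b + 1) 0) by (simpl; f_equal; ring).
        apply is_lim_seq_scal_l.
        apply (is_lim_seq_incr_1 (fun n => / INR n)).
        replace (Finite 0) with (Rbar_inv p_infty) by reflexivity.
        apply is_lim_seq_inv. apply is_lim_seq_INR. discriminate.
Qed.

Lemma hyp1F1_cont a b z : 0 < a -> 0 < b -> continuous (hyp1F1 a b) z.
Proof.
  intros Ha Hb.
  apply continuous_ext with (PSeries (hcoef a b)).
  intros; symmetry; apply hyp1F1_PSeries; auto.
  apply continuity_pt_filterlim. apply PSeries_continuity.
  rewrite hcoef_radius; simpl; auto.
Qed.

Lemma hyp1F1_0 a b : 0 < b -> hyp1F1 a b 0 = 1.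
Proof.
  intros Hb. rewrite hyp1F1_PSeries by auto. rewrite PSeries_0. unfold hcoef. simpl. field.
Qed.


Definition K0 mX mY OX OY := mY * OX / (mY * OX + mX * OY).
Definition phi mX mY OX OY r :=
  hyp1F1 mY mX (mX ^ 2 * OY * r ^ 2 / (OX * (mY * OX + mX * OY))) * exp (- (mX / OX) * r ^ 2).
Definition Acoef mX mY OX OY := 2 / Gamma mX * Rpower (K0 mX mY OX OY) mY * Rpower (mX / OX) mX.

Lemma fR_eq mX mY OX OY r : fR mX mY OX OY r = Acoef mX mY OX OY * Rpower r (2 * mX - 1) * phi mX mY OX OY r.
Proof. unfold fR, Acoef, phi, K0. unfold Rdiv. ring. Qed.

Lemma cont_poly (c : R) x : continuous (fun r => c * r ^ 2) x.
Proof. apply (ex_derive_continuous (K:=R_AbsRing) (V:=R_NormedModule)). auto_derive. auto. Qed.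

Lemma phi_cont mX mY OX OY r : 0 < mX -> 0 < mY -> continuous (phi mX mY OX OY) r.
Proof.
  intros HmX HmY. unfold phi.
  apply (continuous_mult (fun r => hyp1F1 mY mX (mX ^ 2 * OY * r ^ 2 / (OX * (mY * OX + mX * OY))))
                         (fun r => exp (- (mX / OX) * r ^ 2))).
  - apply (continuous_comp (fun r => mX ^ 2 * OY * r ^ 2 / (OX * (mY * OX + mX * OY))) (hyp1F1 mY mX)).
    apply (continuous_ext (fun r => (mX ^ 2 * OY / (OX * (mY * OX + mX * OY))) * r ^ 2)).
    intros t; change ((mX ^ 2 * OY / (OX * (mY * OX + mX * OY))) * t ^ 2 = mX ^ 2 * OY * t ^ 2 / (OX * (mY * OX + mX * OY))); unfold Rdiv; ring. apply cont_poly.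
    apply hyp1F1_cont; auto.
  - apply continuous_exp_comp. apply cont_poly.
Qed.

Lemma phi_0 mX mY OX OY : 0 < mX -> phi mX mY OX OY 0 = 1.
Proof.
  intros HmX. unfold phi. replace (mX ^ 2 * OY * 0 ^ 2 / (OX * (mY * OX + mX * OY))) with 0.
  rewrite hyp1F1_0 by auto. replace (- (mX / OX) * 0 ^ 2) with 0 by ring. rewrite exp_0; ring.
  unfold Rdiv; ring.
Qed.

Lemma Acoef_pos mX mY OX OY : 0 < mX -> 0 < Acoef mX mY OX OY.
Proof.
  intros HmX. unfold Acoef. destruct (Gamma_is mX HmX) as [_ HG].
  unfold Rdiv. repeat apply Rmult_lt_0_compat; try apply Rpower_pos; try lra.
  apply Rinv_0_lt_compat; auto.
Qed.

Lemma fR_cont mX mY OX OY x : 0 < mX -> 0 < mY -> 0 < x -> continuous (fR mX mY OX OY) x.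
Proof.
  intros HmX HmY Hx. apply (continuous_ext (fun r => Acoef mX mY OX OY * Rpower r (2 * mX - 1) * phi mX mY OX OY r)).
  intros; symmetry; apply fR_eq.
  apply (continuous_mult (fun r => Acoef mX mY OX OY * Rpower r (2 * mX - 1)) (phi mX mY OX OY)).
  apply (continuous_mult (fun _ => Acoef mX mY OX OY) (fun r => Rpower r (2 * mX - 1))).
  apply continuous_const. apply continuous_Rpower; auto.
  apply phi_cont; auto.
Qed.

Lemma fR_left_ex mX mY OX OY b : 0 < mX -> 0 < mY -> 0 < b ->
  ex_RInt_gen (fR mX mY OX OY) (at_right 0) (at_point b).
Proof.
  intros HmX HmY Hb.
  destruct (continuity_ab_maj (fun r => Rabs (phi mX mY OX OY r)) 0 b) as [Mx [HM _]]. lra.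
  { intros c _. apply continuity_pt_filterlim. apply (continuous_comp (phi mX mY OX OY) Rabs).
    apply phi_cont; auto. apply continuous_Rabs. }
  apply (ex_gen_right0 _ (2 * mX) b (Acoef mX mY OX OY * Rabs (phi mX mY OX OY Mx))); try lra.
  intros x Hx. split. apply fR_cont; lra.
  rewrite fR_eq. rewrite !Rabs_mult. rewrite (Rabs_pos_eq (Acoef _ _ _ _)) by (apply Rlt_le, Acoef_pos; auto).
  rewrite (Rabs_pos_eq (Rpower _ _)) by (apply Rlt_le, Rpower_pos).
  replace (Acoef mX mY OX OY * Rabs (phi mX mY OX OY Mx) * Rpower x (2 * mX - 1))
    with (Acoef mX mY OX OY * Rpower x (2 * mX - 1) * Rabs (phi mX mY OX OY Mx)) by ring.
  apply Rmult_le_compat_l. apply Rmult_le_pos; apply Rlt_le; [apply Acoef_pos; auto|apply Rpower_pos].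
  apply HM; lra.
Qed.

Definition Lint mX mY OX OY b := RInt_gen (fR mX mY OX OY) (at_right 0) (at_point b).

Lemma Lint_is mX mY OX OY b : 0 < mX -> 0 < mY -> 0 < b ->
  is_RInt_gen (fR mX mY OX OY) (at_right 0) (at_point b) (Lint mX mY OX OY b).
Proof. intros. apply (RInt_gen_correct (V := R_CompleteNormedModule)). apply fR_left_ex; auto. Qed.

Lemma Lint_asym mX mY OX OY : 0 < mX -> 0 < mY ->
  filterlim (fun b => Lint mX mY OX OY b / (Acoef mX mY OX OY * Rpower b (2 * mX) / (2 * mX)))
    (at_right 0) (locally 1).
Proof.
  intros HmX HmY P [eps HP].
  set (A := Acoef mX mY OX OY).
  assert (HA : 0 < A) by (apply Acoef_pos; auto).
  assert (Hc := phi_cont mX mY OX OY 0 HmX HmY).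
  unfold continuous in Hc. rewrite phi_0 in Hc by auto.
  destruct (Hc (ball 1 (eps / 2))) as [d Hd].
  { apply (locally_ball 1 (mkposreal (eps/2) ltac:(destruct eps; simpl; lra))). }
  exists d. intros b Hb Hb0. apply HP.
  assert (Hbd : forall r, 0 < r <= b -> Rabs (phi mX mY OX OY r - 1) < eps / 2).
  { intros r Hr. specialize (Hd r). unfold ball in Hd, Hb; simpl in Hd, Hb.
    unfold AbsRing_ball, abs, minus, plus, opp in Hd, Hb; simpl in Hd, Hb.
    apply Hd. rewrite Ropp_0, Rplus_0_r in *. rewrite Rabs_pos_eq in * by lra. lra. }
  assert (H1 := Lint_is mX mY OX OY b HmX HmY Hb0).
  assert (H2 : is_RInt_gen (fun r => scal A (Rpower r (2 * mX - 1))) (at_right 0) (at_point b)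
                 (scal A (Rpower b (2 * mX) / (2 * mX)))).
  { apply (is_RInt_gen_scal (fun r => Rpower r (2 * mX - 1))). apply is_RInt_gen_power; lra. }
  assert (H3 : is_RInt_gen (fun r => scal (eps / 2 * A) (Rpower r (2 * mX - 1))) (at_right 0) (at_point b)
                 (scal (eps / 2 * A) (Rpower b (2 * mX) / (2 * mX)))).
  { apply (is_RInt_gen_scal (fun r => Rpower r (2 * mX - 1))). apply is_RInt_gen_power; lra. }
  assert (H4 := is_RInt_gen_minus _ _ _ _ H1 H2).
  assert (Hle : filter_prod (at_right 0) (at_point b) (fun ab : R * R => fst ab <= snd ab)).
  { apply fp_right0_point; auto. intros a Ha; simpl; lra. }
  assert (Hdom : filter_prod (at_right 0) (at_point b) (fun ab : R * R => forall x : R, fst ab <= x <= snd ab ->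
      norm ((fun y : R => minus (fR mX mY OX OY y) ((fun r : R => scal A (Rpower r (2 * mX - 1))) y)) x) <=
      (fun r : R => scal (eps / 2 * A) (Rpower r (2 * mX - 1))) x)).
  { apply fp_right0_point; auto. intros a Ha x Hx. simpl in Hx.
    unfold norm, minus, plus, opp, scal; simpl. unfold abs, mult; simpl.
    rewrite fR_eq. fold A.
    replace (A * Rpower x (2 * mX - 1) * phi mX mY OX OY x + - (A * Rpower x (2 * mX - 1)))
      with (A * Rpower x (2 * mX - 1) * (phi mX mY OX OY x - 1)) by ring.
    rewrite Rabs_mult, Rabs_pos_eq by (apply Rlt_le, Rmult_lt_0_compat; [auto|apply Rpower_pos]).
    replace (eps / 2 * A * Rpower x (2 * mX - 1)) with (A * Rpower x (2 * mX - 1) * (eps / 2)) by ring.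
    apply Rmult_le_compat_l. apply Rlt_le, Rmult_lt_0_compat; [auto|apply Rpower_pos].
    apply Rlt_le, Hbd; lra. }
  assert (Hn := RInt_gen_norm (V := R_CompleteNormedModule) _ _ _ _ Hle Hdom H4 H3).
  assert (HB : 0 < Rpower b (2 * mX) / (2 * mX)) by (apply Rdiv_lt_0_compat; [apply Rpower_pos|lra]).
  unfold ball; simpl. unfold AbsRing_ball, abs, minus, plus, opp; simpl.
  unfold norm, minus, plus, opp, scal in Hn; simpl in Hn. unfold abs, mult in Hn; simpl in Hn.
  fold A.
  match goal with |- Rabs ?e < _ => replace e
    with ((Lint mX mY OX OY b + - (A * (Rpower b (2 * mX) / (2 * mX)))) / (A * (Rpower b (2 * mX) / (2 * mX))))
    by (field; repeat split; try apply Rgt_not_eq; try apply Rpower_pos; lra) end.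
  assert (HAB : 0 < A * (Rpower b (2 * mX) / (2 * mX))) by (apply Rmult_lt_0_compat; auto).
  unfold Rdiv at 1. rewrite Rabs_mult, Rabs_Rinv by lra.
  rewrite (Rabs_pos_eq (A * _)) by lra.
  apply (Rmult_lt_reg_r (A * (Rpower b (2 * mX) / (2 * mX)))). auto.
  rewrite Rmult_assoc, Rinv_l by lra. rewrite Rmult_1_r.
  eapply Rle_lt_trans. apply Hn.
  destruct eps as [e He]; simpl. nra.
Qed.

Definition rho mX OX C alpha u := Rpower (OX / (C * mX)) (1/2) * Rpower u (alpha / 4).

Lemma Rpower_sq a p : (Rpower a p) ^ 2 = Rpower a (2 * p).
Proof. unfold Rpower. simpl. rewrite Rmult_1_r, <- exp_plus. f_equal. ring. Qed.

Lemma rho_pos mX OX C alpha u : 0 < rho mX OX C alpha u.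
Proof. unfold rho. apply Rmult_lt_0_compat; apply Rpower_pos. Qed.

Lemma rho_sq mX OX C alpha u : 0 < mX -> 0 < OX -> 0 < C ->
  (rho mX OX C alpha u) ^ 2 = OX / (C * mX) * Rpower u (alpha / 2).
Proof.
  intros. unfold rho. rewrite Rpow_mult_distr, !Rpower_sq.
  replace (2 * (1/2)) with 1 by field. rewrite Rpower_1.
  f_equal. f_equal. field.
  apply Rdiv_lt_0_compat; auto. apply Rmult_lt_0_compat; auto.
Qed.

Lemma snr_lt mX mY OX OY alpha gbar x r : 0 < mX -> 0 < OX -> 0 < alpha -> 0 < gbar -> 0 < x -> 0 < r ->
  let C := Calpha mX mY OX OY alpha in
  (r < rho mX OX C alpha (x / gbar) -> snr_of mX mY OX OY alpha gbar r < x) /\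
  (rho mX OX C alpha (x / gbar) < r -> x < snr_of mX mY OX OY alpha gbar r).
Proof.
  intros HmX HOX Hal Hg Hx Hr C.
  assert (HC : 0 < C) by (unfold C, Calpha; apply Rpower_pos).
  assert (Hu : 0 < x / gbar) by (apply Rdiv_lt_0_compat; auto).
  assert (Hsq := rho_sq mX OX C alpha (x / gbar) HmX HOX HC).
  assert (Hrho := rho_pos mX OX C alpha (x / gbar)).
  set (p := rho mX OX C alpha (x / gbar)) in *.
  assert (Key : C * mX * p ^ 2 / OX = Rpower (x / gbar) (alpha / 2)).
  { rewrite Hsq. field. split; lra. }
  assert (Hx1 : Rpower (C * mX * p ^ 2 / OX) (2 / alpha) = x / gbar).
  { rewrite Key, Rpower_mult. replace (alpha / 2 * (2 / alpha)) with 1 by (field; lra). apply Rpower_1; auto. }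
  assert (Hy : 0 < C * mX * r ^ 2 / OX).
  { apply Rdiv_lt_0_compat; auto. apply Rmult_lt_0_compat. apply Rmult_lt_0_compat; auto. apply pow_lt; auto. }
  assert (Hy2 : 0 < C * mX * p ^ 2 / OX).
  { apply Rdiv_lt_0_compat; auto. apply Rmult_lt_0_compat. apply Rmult_lt_0_compat; auto. apply pow_lt; auto. }
  assert (H2a : 0 < 2 / alpha) by (apply Rdiv_lt_0_compat; lra).
  unfold snr_of. fold C. split; intros Hrp.
  - replace x with (gbar * Rpower (C * mX * p ^ 2 / OX) (2 / alpha)) by (rewrite Hx1; field; lra).
    apply Rmult_lt_compat_l; auto. apply Rlt_Rpower_l; auto. split; auto.
    unfold Rdiv. apply Rmult_lt_compat_r. apply Rinv_0_lt_compat; auto.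
    apply Rmult_lt_compat_l. apply Rmult_lt_0_compat; auto. simpl. nra.
  - replace x with (gbar * Rpower (C * mX * p ^ 2 / OX) (2 / alpha)) at 1 by (rewrite Hx1; field; lra).
    apply Rmult_lt_compat_l; auto. apply Rlt_Rpower_l; auto. split; auto.
    unfold Rdiv. apply Rmult_lt_compat_r. apply Rinv_0_lt_compat; auto.
    apply Rmult_lt_compat_l. apply Rmult_lt_0_compat; auto. simpl. nra.
Qed.

Lemma zero_gen (Fa Fb : (R -> Prop) -> Prop) (HFa : Filter Fa) (HFb : Filter Fb) :
  is_RInt_gen (fun _ => 0) Fa Fb 0.
Proof.
  apply is_RInt_gen_ext with (Derive (fun _ => 0)).
  - apply filter_forall. intros ab x _. apply Derive_const.
  - assert (H : is_RInt_gen (Derive (fun _ : R => 0)) Fa Fb (0 - 0)).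
    { apply is_RInt_gen_Derive.
    + apply filter_forall. intros ab x _. apply ex_derive_const.
    + apply filter_forall. intros ab x _. apply (continuous_ext (fun _ => 0)). intros; symmetry; apply Derive_const.
      apply continuous_const.
    + apply filterlim_const.
    + apply filterlim_const. }
    rewrite Rminus_0_r in H. exact H.
Qed.

Lemma cdf_eq mX mY OX OY alpha gbar x : 0 < mX -> 0 < mY -> 0 < OX -> 0 < alpha -> 0 < gbar -> 0 < x ->
  snr_cdf mX mY OX OY alpha gbar x = Lint mX mY OX OY (rho mX OX (Calpha mX mY OX OY alpha) alpha (x / gbar)).
Proof.
  intros HmX HmY HOX Hal Hg Hx.
  set (p := rho mX OX (Calpha mX mY OX OY alpha) alpha (x / gbar)).
  assert (Hp : 0 < p) by apply rho_pos.
  unfold snr_cdf. apply (is_RInt_gen_unique (V := R_CompleteNormedModule)).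
  replace (Lint mX mY OX OY p) with (plus (Lint mX mY OX OY p) 0) by (unfold plus; simpl; ring).
  apply (is_RInt_gen_Chasles (V := R_NormedModule)) with p.
  - apply is_RInt_gen_ext with (fR mX mY OX OY).
    + apply fp_right0_point; auto. intros a Ha z Hz. simpl in Hz. rewrite Rmin_left, Rmax_right in Hz by lra.
      destruct (Rle_dec (snr_of mX mY OX OY alpha gbar z) x) as [_|Hn]; auto.
      exfalso. apply Hn. left. destruct (snr_lt mX mY OX OY alpha gbar x z) as [H1 _]; auto; try lra.
      apply H1. fold p. lra.
    + apply Lint_is; auto.
  - apply is_RInt_gen_ext with (fun _ => 0).
    + apply fp_point_pinf. intros y Hy z Hz. simpl in Hz. rewrite Rmin_left, Rmax_right in Hz by lra.
      destruct (Rle_dec (snr_of mX mY OX OY alpha gbar z) x) as [Hl|_]; auto.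
      exfalso. destruct (snr_lt mX mY OX OY alpha gbar x z) as [_ H2]; auto; try lra.
      assert (x < snr_of mX mY OX OY alpha gbar z) by (apply H2; fold p; lra). lra.
    + apply zero_gen; apply filter_filter.
Qed.

Lemma fR_exRInt mX mY OX OY a b : 0 < mX -> 0 < mY -> 0 < a -> 0 < b -> ex_RInt (fR mX mY OX OY) a b.
Proof.
  intros. apply (ex_RInt_continuous (V := R_CompleteNormedModule)). intros z Hz. apply fR_cont; auto.
  assert (0 < Rmin a b) by (unfold Rmin; destruct Rle_dec; auto). lra.
Qed.

Lemma Lint_split mX mY OX OY b : 0 < mX -> 0 < mY -> 0 < b ->
  Lint mX mY OX OY b = Lint mX mY OX OY 1 + RInt (fR mX mY OX OY) 1 b.
Proof.
  intros HmX HmY Hb. unfold Lint at 1. apply (is_RInt_gen_unique (V := R_CompleteNormedModule)).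
  change (Lint mX mY OX OY 1 + RInt (fR mX mY OX OY) 1 b) with (plus (Lint mX mY OX OY 1) (RInt (fR mX mY OX OY) 1 b)).
  apply (is_RInt_gen_Chasles (V := R_NormedModule)) with 1.
  apply Lint_is; auto; lra.
  apply is_RInt_gen_at_point. apply (RInt_correct (V := R_CompleteNormedModule)). apply fR_exRInt; auto; lra.
Qed.

Lemma pdf_eq mX mY OX OY alpha gbar g : 0 < mX -> 0 < mY -> 0 < OX -> 0 < alpha -> 0 < gbar -> 0 < g ->
  let C := Calpha mX mY OX OY alpha in
  snr_pdf mX mY OX OY alpha gbar g =
  fR mX mY OX OY (rho mX OX C alpha (g / gbar)) *
  (Rpower (OX / (C * mX)) (1/2) * (alpha / 4 * Rpower (g / gbar) (alpha / 4 - 1) * / gbar)).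
Proof.
  intros HmX HmY HOX Hal Hg Hgg C.
  unfold snr_pdf.
  rewrite (Derive_ext_loc _ (fun x => Lint mX mY OX OY 1 + RInt (fR mX mY OX OY) 1 (rho mX OX C alpha (x / gbar)))).
  2: { exists (mkposreal _ Hgg). intros x Hx. unfold ball in Hx; simpl in Hx.
       unfold AbsRing_ball, abs, minus, plus, opp in Hx; simpl in Hx. apply Rabs_def2 in Hx.
       rewrite cdf_eq by (auto; lra). apply Lint_split; auto. apply rho_pos. }
  apply is_derive_unique.
  set (D := Rpower (OX / (C * mX)) (1/2)).
  set (r0 := rho mX OX C alpha (g / gbar)).
  assert (Hr0 : 0 < r0) by apply rho_pos.
  assert (Hin : is_derive (fun x => rho mX OX C alpha (x / gbar)) g (D * (alpha / 4 * Rpower (g / gbar) (alpha / 4 - 1) * / gbar))).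
  { unfold rho. fold D. apply (is_derive_scal (fun x => Rpower (x / gbar) (alpha / 4))).
    replace (alpha / 4 * Rpower (g / gbar) (alpha / 4 - 1) * / gbar)
      with (scal (/ gbar) (alpha / 4 * Rpower (g / gbar) (alpha / 4 - 1))) by (unfold scal; simpl; unfold mult; simpl; ring).
    apply (is_derive_comp (fun t => Rpower t (alpha / 4)) (fun x => x / gbar)).
    apply is_derive_Rpower. apply Rdiv_lt_0_compat; auto.
    auto_derive. lra. field. lra. }
  assert (Hout : is_derive (fun y => RInt (fR mX mY OX OY) 1 y) r0 (fR mX mY OX OY r0)).
  { apply (is_derive_RInt (V := R_NormedModule) (fR mX mY OX OY) (fun y => RInt (fR mX mY OX OY) 1 y) 1 r0).
    exists (mkposreal _ Hr0). intros y Hy. unfold ball in Hy; simpl in Hy.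
    unfold AbsRing_ball, abs, minus, plus, opp in Hy; simpl in Hy. apply Rabs_def2 in Hy.
    apply (RInt_correct (V := R_CompleteNormedModule)). apply fR_exRInt; auto; lra.
    apply fR_cont; auto. }
  assert (H := is_derive_comp (fun y => RInt (fR mX mY OX OY) 1 y) (fun x => rho mX OX C alpha (x / gbar)) g _ _ Hout Hin).
  assert (H2 := is_derive_plus _ _ _ _ _ (is_derive_const (Lint mX mY OX OY 1) g) H).
  simpl in H2. unfold plus, zero, scal in H2; simpl in H2. unfold mult in H2; simpl in H2.
  replace (fR mX mY OX OY r0 * (D * (alpha / 4 * Rpower (g / gbar) (alpha / 4 - 1) * / gbar)))
    with (0 + D * (alpha / 4 * Rpower (g / gbar) (alpha / 4 - 1) * / gbar) * fR mX mY OX OY r0) by ring.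
  exact H2.
Qed.

Lemma ln_rho mX OX C alpha u : 0 < u ->
  ln (rho mX OX C alpha u) = 1/2 * ln (OX / (C * mX)) + alpha / 4 * ln u.
Proof.
  intros Hu. unfold rho, Rpower. rewrite ln_mult by apply exp_pos. rewrite !ln_exp. ring.
Qed.

Lemma ln_mXOX mX OX C : 0 < mX -> 0 < OX -> 0 < C -> ln (mX / OX) = - (ln C + ln (OX / (C * mX))).
Proof.
  intros. replace (mX / OX) with (/ (C * (OX / (C * mX)))) by (field; lra).
  rewrite ln_Rinv, ln_mult; try lra. apply Rdiv_lt_0_compat; auto. apply Rmult_lt_0_compat; auto.
  apply Rmult_lt_0_compat; auto. apply Rdiv_lt_0_compat; auto. apply Rmult_lt_0_compat; auto.
Qed.

Lemma alg_pdf mX mY OX OY alpha u C : 0 < mX -> 0 < OX -> 0 < C -> 0 < u ->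
  Acoef mX mY OX OY * Rpower (rho mX OX C alpha u) (2 * mX - 1) *
    (Rpower (OX / (C * mX)) (1/2) * (alpha / 4 * Rpower u (alpha / 4 - 1)))
  = alpha * Rpower (K0 mX mY OX OY) mY / (2 * Rpower C mX * Gamma mX) * Rpower u (alpha * mX / 2 - 1).
Proof.
  intros HmX HOX HC Hu.
  assert (HG := proj2 (Gamma_is mX HmX)).
  unfold Acoef. unfold Rpower at 2 3 4 5 7 8.
  rewrite ln_rho, (ln_mXOX mX OX C) by auto.
  set (lD := ln (OX / (C * mX))). set (lC := ln C). set (lu := ln u).
  set (KK := Rpower (K0 mX mY OX OY) mY).
  replace (exp ((alpha * mX / 2 - 1) * lu)) with
    (exp (mX * lC) * (exp (mX * - (lC + lD)) * exp ((2 * mX - 1) * (1 / 2 * lD + alpha / 4 * lu)) *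
       exp (1 / 2 * lD) * exp ((alpha / 4 - 1) * lu))).
  2: { rewrite <- !exp_plus. f_equal. field. }
  assert (exp (mX * lC) <> 0) by (apply Rgt_not_eq, exp_pos).
  field. split; lra.
Qed.

Lemma alg_cdf mX mY OX OY alpha u C : 0 < mX -> 0 < OX -> 0 < C -> 0 < u ->
  Acoef mX mY OX OY * Rpower (rho mX OX C alpha u) (2 * mX) / (2 * mX)
  = Rpower (K0 mX mY OX OY) mY / (Rpower C mX * (mX * Gamma mX)) * Rpower u (alpha * mX / 2).
Proof.
  intros HmX HOX HC Hu.
  assert (HG := proj2 (Gamma_is mX HmX)).
  unfold Acoef. unfold Rpower at 2 3 5 6.
  rewrite ln_rho, (ln_mXOX mX OX C) by auto.
  set (lD := ln (OX / (C * mX))). set (lC := ln C). set (lu := ln u).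
  set (KK := Rpower (K0 mX mY OX OY) mY).
  replace (exp (alpha * mX / 2 * lu)) with
    (exp (mX * lC) * (exp (mX * - (lC + lD)) * exp (2 * mX * (1 / 2 * lD + alpha / 4 * lu)))).
  2: { rewrite <- !exp_plus. f_equal. field. }
  assert (exp (mX * lC) <> 0) by (apply Rgt_not_eq, exp_pos).
  field. repeat split; lra.
Qed.

Lemma alg_exp mX OX C alpha u : 0 < mX -> 0 < OX -> 0 < C ->
  - (mX / OX) * (rho mX OX C alpha u) ^ 2 = - / C * Rpower u (alpha / 2).
Proof. intros. rewrite rho_sq by auto. field. repeat split; lra. Qed.

Lemma lim_rho mX OX C alpha g : 0 < mX -> 0 < OX -> 0 < C -> 0 < alpha -> 0 < g ->
  filterlim (fun gb => rho mX OX C alpha (g / gb)) (Rbar_locally p_infty) (at_right 0).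
Proof.
  intros HmX HOX HC Hal Hg P [eps HP].
  set (D := Rpower (OX / (C * mX)) (1/2)).
  assert (HD : 0 < D) by apply Rpower_pos.
  set (T := Rpower (eps / D) (4 / alpha)).
  assert (HT : 0 < T) by apply Rpower_pos.
  exists (g / T). intros gb Hgb.
  assert (Hgb0 : 0 < gb) by (assert (0 < g / T) by (apply Rdiv_lt_0_compat; auto); lra).
  apply HP.
  2: apply rho_pos.
  unfold ball; simpl. unfold AbsRing_ball, abs, minus, plus, opp; simpl. rewrite Ropp_0, Rplus_0_r.
  rewrite Rabs_pos_eq by (apply Rlt_le, rho_pos).
  unfold rho. fold D.
  assert (Hu : g / gb < T).
  { apply (Rmult_lt_reg_r gb); auto. unfold Rdiv. rewrite Rmult_assoc, Rinv_l, Rmult_1_r by lra.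
    apply (Rmult_lt_reg_l (/ T)). apply Rinv_0_lt_compat; auto.
    replace (/ T * (T * gb)) with gb by (field; lra). unfold Rdiv in Hgb. lra. }
  assert (H1 : Rpower (g / gb) (alpha / 4) < Rpower T (alpha / 4)).
  { apply Rlt_Rpower_l. lra. split; auto. apply Rdiv_lt_0_compat; auto. }
  unfold T in H1. rewrite Rpower_mult in H1. replace (4 / alpha * (alpha / 4)) with 1 in H1 by (field; lra).
  rewrite Rpower_1 in H1 by (apply Rdiv_lt_0_compat; [destruct eps|]; auto).
  apply (Rmult_lt_compat_l D) in H1; auto.
  replace (D * (eps / D)) with (pos eps) in H1 by (field; lra). exact H1.
Qed.

Lemma ratio_pdf (A R1 H E D a R2 t al P CC G R3 : R) :
  A * R1 * (D * (a * R2)) = al * P / (2 * CC * G) * R3 -> 0 < t -> 0 < al -> 0 < P -> 0 < CC -> 0 < G -> 0 < R3 -> 0 < E ->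
  A * R1 * (H * E) * (D * (a * R2 * / t)) / (al * P / (2 * CC * G * t) * R3 * E) = H.
Proof.
  intros E1 Ht Hal HP HCC HG HR3 HE.
  replace (A * R1 * (H * E) * (D * (a * R2 * / t))) with ((A * R1 * (D * (a * R2))) * H * E / t) by (field; lra).
  rewrite E1. field. repeat split; lra.
Qed.

Definition hypc mX mY OX OY r := hyp1F1 mY mX (mX ^ 2 * OY * r ^ 2 / (OX * (mY * OX + mX * OY))).

Lemma hypc_lim mX mY OX OY : 0 < mX -> 0 < mY ->
  filterlim (hypc mX mY OX OY) (at_right 0) (locally 1).
Proof.
  intros HmX HmY.
  assert (Hc : continuous (hypc mX mY OX OY) 0).
  { unfold hypc. apply (continuous_comp (fun r => mX ^ 2 * OY * r ^ 2 / (OX * (mY * OX + mX * OY))) (hyp1F1 mY mX)).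
    apply (continuous_ext (fun r => (mX ^ 2 * OY / (OX * (mY * OX + mX * OY))) * r ^ 2)).
    intros t; change ((mX ^ 2 * OY / (OX * (mY * OX + mX * OY))) * t ^ 2 = mX ^ 2 * OY * t ^ 2 / (OX * (mY * OX + mX * OY))); unfold Rdiv; ring.
    apply cont_poly. apply hyp1F1_cont; auto. }
  unfold continuous in Hc.
  replace (hypc mX mY OX OY 0) with 1 in Hc.
  2: { unfold hypc. replace (mX ^ 2 * OY * 0 ^ 2 / (OX * (mY * OX + mX * OY))) with 0 by (unfold Rdiv; ring).
       rewrite hyp1F1_0; auto. }
  eapply filterlim_filter_le_1. apply filter_le_within. exact Hc.
Qed.

Theorem corollary1 (mX mY OX OY alpha : R)
  (hmX : 0 < mX) (hmY : 0 < mY) (hOX : 0 < OX) (hOY : 0 < OY) (halpha : 0 < alpha)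
  (g : R) (hg : 0 < g) :
  let C := Calpha mX mY OX OY alpha in
  let bb := betabar mX mY OX OY in
  asymp_equiv
    (fun gbar => snr_pdf mX mY OX OY alpha gbar g)
    (fun gbar => alpha * Rpower (1 - bb) mY / (2 * Rpower C mX * Gamma mX * gbar)
                 * Rpower (g / gbar) (alpha * mX / 2 - 1)
                 * exp (- / C * Rpower (g / gbar) (alpha / 2)))
  /\
  asymp_equiv
    (fun gbar => snr_cdf mX mY OX OY alpha gbar g)
    (fun gbar => Rpower (1 - bb) mY / (Rpower C mX * Gamma (mX + 1))
                 * Rpower (g / gbar) (alpha * mX / 2)).
Proof.
  intros C bb.
  assert (HC : 0 < C) by (unfold C, Calpha; apply Rpower_pos).
  assert (Hbb : 1 - bb = K0 mX mY OX OY).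
  { unfold bb, betabar, K0. field. assert (0 < mY * OX + mX * OY) by (apply Rplus_lt_0_compat; apply Rmult_lt_0_compat; auto). lra. }
  destruct (Gamma_is mX hmX) as [_ HG].
  assert (HGs := Gamma_succ mX hmX).
  assert (Hrho := lim_rho mX OX C alpha g hmX hOX HC halpha hg).
  split.
  - unfold asymp_equiv, is_lim. change (Rbar_locally' p_infty) with (Rbar_locally p_infty).
    change (Rbar_locally (Finite 1)) with (locally 1).
    apply filterlim_ext_loc with (fun t => hypc mX mY OX OY (rho mX OX C alpha (g / t))).
    + exists 0. intros t Ht.
      assert (Hu : 0 < g / t) by (apply Rdiv_lt_0_compat; auto).
      rewrite pdf_eq by auto. fold C. rewrite fR_eq. unfold phi.
      rewrite (alg_exp mX OX C alpha (g / t)) by auto. rewrite Hbb.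
      symmetry. apply ratio_pdf; auto; try apply Rpower_pos; try apply exp_pos.
      apply alg_pdf; auto.
    + eapply filterlim_comp. exact Hrho. apply hypc_lim; auto.
  - unfold asymp_equiv, is_lim. change (Rbar_locally' p_infty) with (Rbar_locally p_infty).
    change (Rbar_locally (Finite 1)) with (locally 1).
    apply filterlim_ext_loc with (fun t => Lint mX mY OX OY (rho mX OX C alpha (g / t)) /
          (Acoef mX mY OX OY * Rpower (rho mX OX C alpha (g / t)) (2 * mX) / (2 * mX))).
    + exists 0. intros t Ht.
      assert (Hu : 0 < g / t) by (apply Rdiv_lt_0_compat; auto).
      rewrite cdf_eq by auto. fold C. rewrite Hbb, HGs.
      rewrite alg_cdf by auto. reflexivity.
    + apply (filterlim_comp _ _ _ (fun t => rho mX OX C alpha (g / t))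
        (fun b => Lint mX mY OX OY b / (Acoef mX mY OX OY * Rpower b (2 * mX) / (2 * mX))) _ (at_right 0)).
      exact Hrho. apply Lint_asym; auto.
Qed.
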